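(* Let $H$ be a fixed hypergraph on $m$ vertices $\{1,\dots,m\}$ and $s_1,\dots,s_m$ positive integers, and let $\delta=\frac{\max\{s_i:1\le i\le m\}}{\prod_{i=1}^m s_i}$. Then for sufficiently large $n$, every hypergraph $G$ on $n$ vertices with $R(G)=R(H)$ that contains no subgraph $H(s_1,\dots,s_m)$ satisfies $\mu_H(G)=O(n^{-\delta})$ (the implied constant depending only on $H$ and $s_1,\dots,s_m$).
   Context: A hypergraph $H=(V,E)$ has finite vertex set $V$ and edge set $E\subseteq 2^V$; $R(H)=\{|F|:F\in E\}$. $H_1\subseteq H_2$ (subgraph) means there is an injective $f\colon V(H_1)\to V(H_2)$ with $f(F)\in E(H_2)$ for all $F\in E(H_1)$. The density $\mu_H(G)$ of $H$ in $G$ (with $R(H)=R(G)$) is the probability that a uniformly random injective map $f\colon V(H)\to V(G)$ satisfies $f(F)\in E(G)$ for all $F\in E(H)$. The blowup $H(s_1,\dots,s_m)$ has vertex set $V_1\sqcup\dots\sqcup V_m$, $|V_i|=s_i$, and edge set $\bigcup_{F\in E(H)}\prod_{i\in F}V_i$. *)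

(* Defs.v *)
From mathcomp Require Import all_boot.
From Stdlib Require Import Reals.
Set Implicit Arguments. Unset Strict Implicit. Unset Printing Implicit Defensive.

(* A hypergraph on a finite vertex type V is given by its edge set E : {set {set V}}. *)

Definition in_ranks (V : finType) (E : {set {set V}}) (k : nat) : bool :=
  [exists F in E, #|F| == k].

Definition same_ranks (V1 V2 : finType) (E1 : {set {set V1}}) (E2 : {set {set V2}}) : Prop :=
  forall k : nat, in_ranks E1 k = in_ranks E2 k.

Definition subgraph (V1 V2 : finType) (E1 : {set {set V1}}) (E2 : {set {set V2}}) : Prop :=
  exists f : V1 -> V2, injective f /\ forall F, F \in E1 -> f @: F \in E2.

Definition blowV (m : nat) (s : 'I_m -> nat) : finType := {i : 'I_m & 'I_(s i)}.

(* Edges of the blowup: the union over F in E(H) of prod_{i in F} V_i,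
   a choice (x_i)_{i in F} being identified with the set {x_i : i in F}. *)
Definition blowup (m : nat) (s : 'I_m -> nat) (E : {set {set 'I_m}}) : {set {set blowV s}} :=
  [set X : {set blowV s} | [exists F in E,
      [exists g : {dffun forall i : 'I_m, 'I_(s i)},
            X == [set (Tagged (fun i => 'I_(s i)) (g i) : blowV s) | i in F]]]].

(* mu_H(G): probability that a uniformly random injective map V(H) -> V(G)
   sends every edge of H to an edge of G. *)
Definition inj_maps (m n : nat) : {set {ffun 'I_m -> 'I_n}} :=
  [set f : {ffun 'I_m -> 'I_n} | injectiveb f].

Definition hom_maps (m n : nat) (E : {set {set 'I_m}}) (EG : {set {set 'I_n}})
  : {set {ffun 'I_m -> 'I_n}} :=
  [set f in inj_maps m n | [forall F in E, (f @: F) \in EG]].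

Definition density (m n : nat) (E : {set {set 'I_m}}) (EG : {set {set 'I_n}}) : R :=
  (INR #|hom_maps E EG| / INR #|inj_maps m n|)%R.

Definition delta (m : nat) (s : 'I_m -> nat) : R :=
  (INR (\max_(i < m) s i) / INR (\prod_(i < m) s i))%R.

(* Main.v *)
Require Import Defs.
From mathcomp Require Import all_boot.
From mathcomp Require Import zify.
Set Implicit Arguments. Unset Strict Implicit. Unset Printing Implicit Defensive.

Lemma expn_mono (x y k : nat) : x <= y -> x ^ k <= y ^ k.
Proof. by case: k => [//|k] H; rewrite leq_exp2r. Qed.

Lemma pt_ineq (x y k : nat) : x * y ^ k + y * x ^ k <= x * x ^ k + y * y ^ k.
Proof.
wlog le_xy : x y / x <= y.
  move=> H; case: (leqP x y) => [/H //|/ltnW /H]; lia.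
have := expn_mono k le_xy.
move: (x ^ k) (y ^ k) => a b; nia.
Qed.

Lemma sum_const_card (A : finType) (c : nat) : \sum_(a : A) c = #|A| * c.
Proof. by rewrite sum_nat_const. Qed.

Lemma cheb (A : finType) (e : A -> nat) k :
  (\sum_a e a) * (\sum_a e a ^ k) <= #|A| * \sum_a e a ^ k.+1.
Proof.
rewrite big_distrlr /=.
have -> : #|A| * \sum_a e a ^ k.+1 = \sum_a \sum_(b : A) e a ^ k.+1.
  by rewrite mulnC big_distrl /=; apply: eq_bigr => a _; rewrite sum_const_card mulnC.
rewrite -(leq_pmul2l (isT : 0 < 2)) !mul2n -!addnn.
rewrite [X in _ + X <= _]exchange_big [X in _ <= _ + X]exchange_big /=.
rewrite -!big_split /=; apply: leq_sum => a _; rewrite -!big_split /=.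
apply: leq_sum => b _; rewrite !expnS; have := pt_ineq (e a) (e b) k; lia.
Qed.

Lemma jensen (A : finType) (e : A -> nat) k :
  #|A| * (\sum_a e a) ^ k <= #|A| ^ k * \sum_a e a ^ k.
Proof.
elim: k => [|k IH]; first by rewrite !expn0 mul1n muln1 sum_const_card muln1.
rewrite expnS mulnCA (leq_trans (leq_mul (leqnn _) IH)) //.
rewrite mulnCA expnS (mulnC #|A|) -mulnA; apply: leq_mul => //.
exact: cheb.
Qed.


Section Abs.
Variable X : finType.

Fixpoint Asg (t : seq nat) : finType :=
  match t with [::] => unit | t0 :: t' => ({ffun 'I_t0 -> X} * Asg t')%type end.
Fixpoint Sel (t : seq nat) : finType :=
  match t with [::] => unit | t0 :: t' => ('I_t0 * Sel t')%type end.
Fixpoint rd (t : seq nat) : Asg t -> Sel t -> seq X :=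
  match t with [::] => fun _ _ => [::]
  | t0 :: t' => fun Z G => Z.1 G.1 :: rd Z.2 G.2 end.

Fixpoint Sv (m : nat) (f : seq X -> nat) : nat :=
  if m is m'.+1 then \sum_(x : X) Sv m' (fun y => f (x :: y)) else f [::].

Definition T t (f : seq X -> nat) := \sum_(Z : Asg t) \prod_(G : Sel t) f (rd Z G).

Lemma Sv_sum (I : finType) m (g : I -> seq X -> nat) :
  Sv m (fun y => \sum_i g i y) = \sum_i Sv m (g i).
Proof.
elim: m g => [//|m IH] g /=.
under eq_bigr => x _ do rewrite IH.
by rewrite exchange_big.
Qed.

Lemma eq_Sv m (f g : seq X -> nat) : (forall y, f y = g y) -> Sv m f = Sv m g.
Proof.
elim: m f g => [|m IH] f g H /=; first exact: H.
by apply: eq_bigr => x _; apply: IH.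
Qed.

Lemma Sv_le m (f g : seq X -> nat) : (forall y, f y <= g y) -> Sv m f <= Sv m g.
Proof.
elim: m f g => [|m IH] f g H /=; first exact: H.
by apply: leq_sum => x _; apply: IH.
Qed.

Lemma Sv_jensen m (h : seq X -> nat) k :
  #|X| ^ m * Sv m h ^ k <= #|X| ^ (m * k) * Sv m (fun y => h y ^ k).
Proof.
elim: m h => [|m IH] h /=; first by rewrite !mul1n.
rewrite expnS (mulnC #|X|) -mulnA (leq_trans (leq_mul (leqnn _) (jensen _ _))) //.
rewrite mulnCA mulSn expnD -mulnA leq_mul2l; apply/orP; right.
rewrite big_distrr /= big_distrr /=; apply: leq_sum => x _.
exact: IH.
Qed.

Lemma T_nil f : T [::] f = f [::].
Proof. by rewrite /T (big_pred1 tt) // (big_pred1 tt) //; case. Qed.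

Lemma T_cons t0 t f : T (t0 :: t) f =
  \sum_(z0 : {ffun 'I_t0 -> X}) T t (fun y => \prod_(g0 : 'I_t0) f (z0 g0 :: y)).
Proof.
transitivity (\sum_(p : ({ffun 'I_t0 -> X} * Asg t)%type)
   \prod_(G : Sel (t0 :: t)) f (rd (t:=t0::t) p G)); first by [].
rewrite -(pair_bigA _ (fun (z0 : {ffun 'I_t0 -> X}) (Z : Asg t) =>
   \prod_(G : Sel (t0 :: t)) f (rd (t:=t0::t) (z0, Z) G))).
apply: eq_bigr => z0 _; apply: eq_bigr => Z _.
transitivity (\prod_(q : ('I_t0 * Sel t)%type) f (rd (t:=t0::t) (z0, Z) q)); first by [].
rewrite -(pair_bigA _ (fun (g0 : 'I_t0) (G : Sel t) => f (rd (t:=t0::t) (z0, Z) (g0, G)))) /=.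
by rewrite exchange_big.
Qed.

Lemma distr_pow (k : nat) (h : X -> nat) :
  \sum_(z0 : {ffun 'I_k -> X}) \prod_(g0 : 'I_k) h (z0 g0) = (\sum_x h x) ^ k.
Proof.
rewrite -(bigA_distr_bigA (fun (_ : 'I_k) x => h x)) /=.
by rewrite prod_nat_const card_ord.
Qed.

Lemma card_ffun_ord k : #|{ffun 'I_k -> X}| = #|X| ^ k.
Proof. by rewrite card_ffun card_ord. Qed.

Definition Pr (t : seq nat) := \prod_(x <- t) x.

Theorem thmA (t : seq nat) (f : seq X -> nat) : 0 < #|X| ->
  #|X| ^ sumn t * Sv (size t) f ^ Pr t <= #|X| ^ (size t * Pr t) * T t f.
Proof.
move=> N0; elim: t f => [|t0 t IH] f.
  by rewrite T_nil /Pr big_nil /= !mul1n expn1.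
set N := #|X|; rewrite T_cons /Pr big_cons -/(Pr t) /=.
set m := size t; set P' := Pr t.
set fz := fun z0 : {ffun 'I_t0 -> X} => fun y => \prod_(g0 : 'I_t0) f (z0 g0 :: y).
set Sz := fun z0 => Sv m (fz z0).
have H1 : N ^ sumn t * \sum_z0 Sz z0 ^ P' <= N ^ (m * P') * \sum_z0 T t (fz z0).
  rewrite !big_distrr /=; apply: leq_sum => z0 _; exact: IH.
have H2 : N ^ t0 * (\sum_z0 Sz z0) ^ P' <= (N ^ t0) ^ P' * \sum_z0 Sz z0 ^ P'.
  by have := jensen Sz P'; rewrite card_ffun_ord.
have H3 : N ^ m * Sv m.+1 f ^ t0 <= N ^ (m * t0) * \sum_z0 Sz z0.
  have -> : \sum_z0 Sz z0 = Sv m (fun y => (\sum_x f (x :: y)) ^ t0).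
    rewrite /Sz /fz -Sv_sum; apply: eq_Sv => y.
    by rewrite -(distr_pow t0 (fun x => f (x :: y))).
  have -> : Sv m.+1 f = Sv m (fun y => \sum_x f (x :: y)) by rewrite Sv_sum.
  exact: Sv_jensen.
have H3p := expn_mono P' H3; rewrite !expnMn in H3p.
rewrite -(leq_pmul2l (_ : 0 < N ^ (m * P'))); last by rewrite expn_gt0 N0.
have E1 : N ^ (m * P') = (N ^ m) ^ P' by rewrite expnM.
have E2 : Sv m.+1 f ^ (t0 * P') = (Sv m.+1 f ^ t0) ^ P' by rewrite expnM.
have E3 : N ^ (m.+1 * (t0 * P')) = (N ^ (m * t0)) ^ P' * (N ^ t0) ^ P'.
  by rewrite -!expnM -expnD mulSn mulnA addnC.
rewrite E2 E3 expnD {1}E1 -E1.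
move: H1 H2 H3p; rewrite -E1.
move: (N ^ sumn t) (N ^ t0) (N ^ (m * P')) ((N ^ m) ^ P') ((N ^ (m * t0)) ^ P') ((N ^ t0) ^ P')
  ((Sv m.+1 f ^ t0) ^ P') ((\sum_z0 Sz z0) ^ P') (\sum_z0 Sz z0 ^ P') (\sum_z0 T t (fz z0)).
move=> a b c c' d e x y w tt h1 h2 h3.
have k1 : a * b * (c * x) <= a * b * (d * y) by apply: leq_mul.
have k2 : a * d * (b * y) <= a * d * (e * w) by apply: leq_mul.
have k3 : d * e * (a * w) <= d * e * (c * tt) by apply: leq_mul.
lia.
Qed.

End Abs.



Section Low.
Variable X : finType.

Lemma Sv_ge m (A : finType) (P : pred A) (rho : A -> seq X) (f : seq X -> nat) :
  {in P &, injective rho} -> (forall a, P a -> size (rho a) = m) ->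
  \sum_(a | P a) f (rho a) <= Sv m f.
Proof.
elim: m A P rho f => [|m IH] A P rho f Hinj Hs.
  case: (pickP P) => [a Pa | P0]; last by rewrite big_pred0.
  rewrite (big_pred1 a) /=; last first.
    move=> b; apply/idP/eqP => [Pb|->//]; apply: Hinj => //.
    by rewrite (size0nil (Hs _ Pb)) (size0nil (Hs _ Pa)).
  by rewrite (size0nil (Hs _ Pa)).
case: (pickP P) => [a Pa | P0]; last by rewrite big_pred0.
have [x0 _] : exists x0 : X, True.
  by move: (Hs _ Pa); case: (rho a) => [//|x0 _ _]; exists x0.
rewrite (partition_big (fun a => head x0 (rho a)) predT) //=.
apply: leq_sum => x _.
have Hc : forall b, P b && (head x0 (rho b) == x) -> rho b = x :: behead (rho b).
  move=> b /andP [Pb /eqP <-]; move: (Hs _ Pb); by case: (rho b).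
rewrite (eq_bigr (fun b => f (x :: behead (rho b)))); last by move=> b /Hc <-.
apply: (IH _ _ (fun b => behead (rho b)) (fun y => f (x :: y))).
  move=> b c Pb Pc E; apply: Hinj; [by case/andP: Pb|by case/andP: Pc|].
  by rewrite (Hc _ Pb) (Hc _ Pc) E.
move=> b /andP [Pb _]; by rewrite size_behead Hs.
Qed.

End Low.


Section Up.
Variable X : finType.
Variable x0 : X.

Fixpoint vals (t : seq nat) : Asg X t -> seq X :=
  match t with [::] => fun _ => [::]
  | t0 :: t' => fun Z => codom Z.1 ++ vals Z.2 end.

Fixpoint off (t : seq nat) (p : nat) : nat :=
  match t, p with t0 :: t', p'.+1 => t0 + off t' p' | _, _ => 0 end.

Fixpoint selG (t : seq nat) : Sel t -> nat -> nat :=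
  match t with [::] => fun _ _ => 0
  | t0 :: t' => fun G p => if p is p'.+1 then selG G.2 p' else val G.1 end.

Definition get t (Z : Asg X t) p c := nth x0 (vals Z) (off t p + c).

Lemma size_vals t (Z : Asg X t) : size (vals Z) = sumn t.
Proof. by elim: t Z => [//|t0 t IH] [z Z] /=; rewrite size_cat size_codom card_ord IH. Qed.

Lemma size_rd t (Z : Asg X t) G : size (rd Z G) = size t.
Proof. by elim: t Z G => [//|t0 t IH] [z Z] [g G] /=; rewrite IH. Qed.

Lemma nth_codom_ord k (z : {ffun 'I_k -> X}) (i : 'I_k) : nth x0 (codom z) i = z i.
Proof.
rewrite codomE (nth_map i) ?size_enum_ord //.
by rewrite nth_ord_enum.
Qed.

Lemma rd_nth t (Z : Asg X t) G p : p < size t ->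
  nth x0 (rd Z G) p = get Z p (selG G p).
Proof.
rewrite /get; elim: t Z G p => [//|t0 t IH] [z Z] [g G] [|p] /= Hp.
  by rewrite add0n nth_cat size_codom card_ord ltn_ord nth_codom_ord.
rewrite IH // nth_cat size_codom card_ord -addnA ltnNge leq_addr /=.
by rewrite addKn.
Qed.

Lemma off_lt t p c : p < size t -> c < nth 0 t p -> off t p + c < sumn t.
Proof.
elim: t p => [//|t0 t IH] [|p] /= Hp Hc; first by rewrite add0n ltn_addr.
by rewrite -addnA ltn_add2l IH.
Qed.

Lemma off_inj t p c p' c' : p < size t -> c < nth 0 t p ->
  p' < size t -> c' < nth 0 t p' -> off t p + c = off t p' + c' -> p = p' /\ c = c'.
Proof.
elim: t p p' => [//|t0 t IH] [|p] [|p'] /= Hp Hc Hp' Hc'.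
- by rewrite !add0n.
- by rewrite add0n => E; move: Hc; rewrite E -addnA ltnNge leq_addr.
- by rewrite add0n => E; move: Hc'; rewrite -E -addnA ltnNge leq_addr.
- rewrite -!addnA => /addnI E; by have [-> ->] := IH _ _ Hp Hc Hp' Hc' E.
Qed.

Lemma get_mem t (Z : Asg X t) p c : p < size t -> c < nth 0 t p -> get Z p c \in vals Z.
Proof. by move=> Hp Hc; rewrite /get mem_nth // size_vals off_lt. Qed.

Lemma sel_exists t (sg : nat -> nat) :
  (forall p, p < size t -> sg p < nth 0 t p) ->
  exists G : Sel t, forall p, p < size t -> selG G p = sg p.
Proof.
elim: t sg => [|t0 t IH] sg H; first by exists tt.
have [G HG] := IH (fun p => sg p.+1) (fun p Hp => H p.+1 Hp).
exists (Ordinal (H 0 isT), G) => [[|p]] //= Hp.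
by rewrite HG.
Qed.

Lemma card_Asg t : #|Asg X t| = #|X| ^ sumn t.
Proof.
elim: t => [|t0 t IH] /=; first by rewrite card_unit.
by rewrite card_prod IH card_ffun_ord expnD.
Qed.

Lemma vals_inj t : injective (@vals t).
Proof.
elim: t => [|t0 t IH] /=; first by case=> [] [].
move=> [z Z] [z' Z'] /= E.
have Es : size (codom z) = size (codom z') by rewrite !size_codom.
have [E1 E2] : codom z = codom z' /\ vals Z = vals Z'.
  by move/eqP: E; rewrite eqseq_cat // => /andP [/eqP -> /eqP ->].
rewrite (IH _ _ E2); congr pair.
apply/ffunP => i; by rewrite -!nth_codom_ord E1.
Qed.

End Up.


Lemma sum_inj_le (I J : finType) (h : I -> J) (F : J -> nat) :
  injective h -> \sum_i F (h i) <= \sum_j F j.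
Proof.
move=> Hh; rewrite (bigID (mem [set h i | i in predT])) /=.
apply: leq_trans (leq_addr _ _).
rewrite (big_imset F (in2W Hh)) /=.
by apply: eq_leq; apply: eq_bigl => i.
Qed.

Section Cnt.
Variable X : finType.

Lemma sum_eqb (a b : X) : \sum_x ((a == x) * (b == x)) = (a == b).
Proof.
rewrite (bigD1 a) //= eqxx mul1n big1 ?addn0; first by rewrite eq_sym.
by move=> x; rewrite eq_sym => /negbTE ->.
Qed.

Lemma count_eq (I : finType) (p q : I) : p != q ->
  #|X| * \sum_(phi : {ffun I -> X}) (phi p == phi q) = #|X| ^ #|I|.
Proof.
move=> npq.
have E1 : \sum_(phi : {ffun I -> X}) (phi p == phi q) =
   \sum_x \sum_(phi : {ffun I -> X}) \prod_k
      (if k == p then (phi k == x : nat) else if k == q then (phi k == x : nat) else 1).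
  rewrite exchange_big /=; apply: eq_bigr => phi _.
  rewrite -sum_eqb; apply: eq_bigr => x _.
  rewrite (bigD1 p) //= eqxx (bigD1 q) /=; last by rewrite eq_sym.
  rewrite [q == p]eq_sym (negbTE npq) eqxx big1 ?muln1 //.
  by move=> k /andP [/negbTE -> /negbTE ->].
rewrite E1.
have E2 : forall x : X, \sum_(phi : {ffun I -> X}) \prod_k
      (if k == p then (phi k == x : nat) else if k == q then (phi k == x : nat) else 1)
    = #|X| ^ #|[pred k | (k != p) && (k != q)]|.
  move=> x.
  rewrite -(bigA_distr_bigA (fun k y => if k == p then (y == x : nat) else if k == q then (y == x : nat) else 1)) /=.
  rewrite -prod_nat_const [RHS]big_mkcond /=; apply: eq_bigr => k _.
  have Ex : \sum_(y : X) (y == x : nat) = 1.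
    by rewrite (bigD1 x) //= eqxx big1 // => y /negbTE ->.
  rewrite inE; case: (k =P p) => [_|_]; first by rewrite Ex.
  case: (k =P q) => [_|_] /=; first by rewrite Ex.
  by rewrite sum_const_card muln1.
under eq_bigr => x _ do rewrite E2.
rewrite sum_const_card -expnS.
rewrite -expnS; congr expn.
have := cardC (pred2 p q); rewrite card2 npq => <-.
rewrite add2n; congr _.+2; apply: eq_card => k /=.
by rewrite !inE negb_or.
Qed.

End Cnt.


Section NU.
Variable X : finType.
Variable x0 : X.

Lemma count_nonuniq t :
  #|X| * #|[set Z : Asg X t | ~~ uniq (vals Z)]| <= sumn t * sumn t * #|X| ^ sumn t.
Proof.
set M := sumn t.
pose vf (Z : Asg X t) := [ffun p : 'I_M => nth x0 (vals Z) p].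
have vf_inj : injective vf.
  move=> Z Z' E; apply: (vals_inj x0); apply: (@eq_from_nth _ x0).
    by rewrite !size_vals.
  move=> i; rewrite size_vals => Hi.
  by have := congr1 (fun f : {ffun 'I_M -> X} => f (Ordinal Hi)) E; rewrite /vf !ffunE.
have H1 : #|[set Z : Asg X t | ~~ uniq (vals Z)]| <=
    \sum_(Z : Asg X t) \sum_(p : 'I_M) \sum_(q : 'I_M | q != p) (vf Z p == vf Z q : nat).
  rewrite -sum1_card big_mkcond /=; apply: leq_sum => Z _.
  rewrite inE; case: (uniqPn x0) => [[i [j [lij ljs E]]]|//].
  have Hj : j < M by rewrite /M -(size_vals Z).
  have Hi : i < M by apply: ltn_trans Hj.
  rewrite (bigD1 (Ordinal Hi)) //= (bigD1 (Ordinal Hj)) /=; last first.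
    by rewrite -val_eqE /= gtn_eqF.
  by rewrite /vf !ffunE /= E eqxx -addnA leq_addr.
have H2 : \sum_(Z : Asg X t) \sum_(p : 'I_M) \sum_(q : 'I_M | q != p) (vf Z p == vf Z q : nat)
   <= \sum_(p : 'I_M) \sum_(q : 'I_M | q != p) \sum_(phi : {ffun 'I_M -> X}) (phi p == phi q : nat).
  rewrite exchange_big /=; apply: leq_sum => p _.
  rewrite exchange_big /=; apply: leq_sum => q _.
  exact: (sum_inj_le (fun phi : {ffun 'I_M -> X} => (phi p == phi q : nat)) vf_inj).
apply: (leq_trans (leq_mul (leqnn _) (leq_trans H1 H2))).
rewrite big_distrr /=.
apply: (@leq_trans (\sum_(p : 'I_M) \sum_(q : 'I_M) #|X| ^ M)).
  apply: leq_sum => p _; rewrite big_distrr /=.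
  apply: (@leq_trans (\sum_(q : 'I_M | q != p) #|X| ^ M)); last first.
    by rewrite [X in _ <= X](bigID (fun q => q != p)) /= leq_addr.
  apply: eq_leq; apply: eq_bigr => q nqp.
  by rewrite count_eq ?card_ord // eq_sym.
by rewrite !sum_const_card card_ord mulnA.
Qed.

End NU.


Lemma prod_bool (A : finType) (b : A -> bool) : \prod_a (b a : nat) = [forall a, b a].
Proof.
case: (boolP [forall a, b a]) => [/forallP H | /forallPn [a nb]].
  by rewrite big1 // => a _; rewrite H.
by rewrite (bigD1 a) //= (negbTE nb).
Qed.

Lemma sum_bool (A : finType) (b : A -> bool) : \sum_a (b a : nat) = #|[set a | b a]|.
Proof.
rewrite -sum1_card [RHS]big_mkcond /=; apply: eq_bigr => a _; by rewrite inE; case: (b a).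
Qed.

Lemma T_one (X : finType) t (f : seq X -> nat) :
  T (1 :: t) f = \sum_(Z : Asg X t) \sum_(w : X) \prod_(G : Sel t) f (w :: rd Z G).
Proof.
rewrite T_cons /T exchange_big /=; apply: eq_bigr => Z _.
rewrite -[RHS]expn1 -(distr_pow 1 (fun w => \prod_(G : Sel t) f (w :: rd Z G))).
by apply: eq_bigr => z0 _; rewrite exchange_big.
Qed.

Section Main.
Variables (m : nat) (E : {set {set 'I_m}}) (s : 'I_m -> nat) (n : nat)
  (EG : {set {set 'I_n}}) (j : 'I_m) (x0 : 'I_n).

Definition L := enum [pred i : 'I_m | i != j].
Definition tt' := map s L.
Definition homL (y : seq 'I_n) : bool :=
  [forall F in E, [set nth x0 y (index i (j :: L)) | i in F] \in EG].
Definition fL (y : seq 'I_n) : nat := homL y.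

Lemma memL i : (i \in L) = (i != j).
Proof. by rewrite /L mem_enum inE. Qed.

Lemma size_tt : size tt' = size L.
Proof. by rewrite size_map. Qed.

Hypothesis Hsub : ~ subgraph (blowup s E) EG.

Lemma e_bound_dummy : True. Proof. by []. Qed.
Lemma e_bound (Z : Asg 'I_n tt') : uniq (vals Z) ->
  #|[set w | [forall G, homL (w :: rd Z G)]]| < s j + sumn tt'.
Proof.
move=> uZ; rewrite ltnNge; apply/negP => Hbig; apply: Hsub.
set Good := [set w | [forall G, homL (w :: rd Z G)]] in Hbig.
set W := Good :\: [set w | w \in vals Z].
have HW : s j <= #|W|.
  rewrite -(leq_add2r (sumn tt')) (leq_trans Hbig) // -(cardsID [set w | w \in vals Z] Good).
  rewrite addnC leq_add2l /W.
  apply: (leq_trans (subset_leq_card (subsetIr _ _))).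
  rewrite -(size_vals Z); apply: leq_trans (card_size (vals Z)).
  by apply/subset_leq_card/subsetP => w; rewrite inE.
set ws := enum W.
have uws : uniq ws := enum_uniq _.
have sws : s j <= size ws by rewrite -cardE.
have wsW : forall c, c < s j -> nth x0 ws c \in W.
  by move=> c Hc; rewrite -mem_enum mem_nth // (leq_trans Hc).
pose emb (u : blowV s) : 'I_n :=
  if tag u == j then nth x0 ws (tagged u) else get x0 Z (index (tag u) L) (tagged u).
have getM : forall i (c : 'I_(s i)), i != j ->
    index i L < size tt' /\ c < nth 0 tt' (index i L).
  move=> i c nij; rewrite size_tt index_mem memL nij; split => //.
  by rewrite (nth_map j) ?index_mem ?memL // nth_index ?memL.
exists emb; split.
  move=> [i c] [i' c']; rewrite /emb /=.
  case: (i =P j) => [Eij | /eqP nij]; try subst i; case: (i' =P j) => [Eij' | /eqP nij']; try subst i'.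
  - move/eqP; rewrite nth_uniq // ?(leq_trans _ sws) // => /eqP E1.
    by congr existT; apply: val_inj.
  - move=> E1; have := wsW _ (ltn_ord c); rewrite E1 !inE.
    have [H1 H2] := getM _ c' nij'.
    by rewrite get_mem.
  - move=> E1; have := wsW _ (ltn_ord c'); rewrite -E1 !inE.
    have [H1 H2] := getM _ c nij.
    by rewrite get_mem.
  - have [H1 H2] := getM _ c nij; have [H1' H2'] := getM _ c' nij'.
    move/eqP; rewrite /get nth_uniq ?size_vals ?off_lt // => /eqP E1.
    have [E2 E3] := off_inj H1 H2 H1' H2' E1.
    have Eii : i = i'.
      by rewrite -(nth_index j (_ : i \in L)) ?memL // E2 nth_index ?memL.
    subst i'; congr existT; exact: val_inj.
move=> B; rewrite /blowup inE => /existsP [F /andP [FE /existsP [g /eqP ->]]].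
rewrite -imset_comp.
set w := nth x0 ws (g j).
have wG : w \in Good by have := wsW _ (ltn_ord (g j)); rewrite inE => /andP [].
have Hsg : forall p, p < size tt' -> (fun p => nat_of_ord (g (nth j L p))) p < nth 0 tt' p.
  by move=> p; rewrite size_tt => Hp /=; rewrite (nth_map j).
have [G HG] := sel_exists Hsg.
move: wG; rewrite inE => /forallP /(_ G) /forallP /(_ F); rewrite FE /=.
congr (_ \in EG); apply: eq_imset => i /=.
rewrite /emb /=; case: (i =P j) => [Eij | /eqP nij].
  subst i; by rewrite eqxx.
have [H1 H2] := getM _ (g i) nij.
rewrite eq_sym (negbTE nij) /= rd_nth ?HG //.
by rewrite nth_index // memL.
Qed.

Lemma T_bound : T (1 :: tt') fL <=
  n ^ sumn tt' * (s j + sumn tt' + sumn tt' * sumn tt').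
Proof.
rewrite T_one.
apply: (@leq_trans (\sum_(Z : Asg 'I_n tt') ((s j + sumn tt') + n * (~~ uniq (vals Z))))).
  apply: leq_sum => Z _.
  rewrite (eq_bigr (fun w => ([forall G, homL (w :: rd Z G)] : nat))); last first.
    by move=> w _; rewrite /fL prod_bool.
  rewrite sum_bool; case: (boolP (uniq (vals Z))) => uZ.
    by rewrite /= muln0 addn0 ltnW // e_bound.
  rewrite muln1 (leq_trans _ (leq_addl _ _)) //.
  by rewrite -[n in _ <= n]card_ord max_card.
rewrite big_split /= sum_const_card card_Asg card_ord -big_distrr /= sum_bool.
rewrite [X in _ <= X]mulnDr leq_add2l.
by have := count_nonuniq x0 tt'; rewrite card_ord [X in _ <= X]mulnC.
Qed.

End Main.


Lemma ffact_bound (n m : nat) : 2 * m <= n -> n ^ m <= 2 ^ m * n ^_ m.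
Proof.
elim: m => [|m IH] H; first by rewrite ffactn0.
rewrite ffactnSr expnS [2 ^ m.+1]expnS.
have IH' := IH (leq_trans (leq_mul (leqnn 2) (leqnSn m)) H).
have : n <= 2 * (n - m) by lia.
move: IH'; move: (n ^ m) (2 ^ m) (n ^_ m) (n - m) => a b c d h1 h2.
have h3 : a * n <= (b * c) * (2 * d) by apply: leq_mul.
rewrite mulnC; apply: leq_trans h3 _; apply: eq_leq; lia.
Qed.

Section Fin.
Variables (m : nat) (E : {set {set 'I_m}}) (s : 'I_m -> nat) (n : nat)
  (EG : {set {set 'I_n}}) (j : 'I_m) (x0 : 'I_n).

Lemma sizeL : (size (L j)).+1 = m.
Proof.
rewrite /L -cardE (eq_card (B := predC1 j)) ?cardC1 ?card_ord //.
by case: m j => [[]|].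
Qed.

Lemma hom_le : #|hom_maps E EG| <= Sv m (fL E EG j x0).
Proof.
pose rho (phi : {ffun 'I_m -> 'I_n}) := map phi (j :: L j).
have nthr : forall phi i, nth x0 (rho phi) (index i (j :: L j)) = phi i.
  move=> phi i; have Hi : i \in j :: L j by rewrite in_cons memL; case: (i == j).
  by rewrite (nth_map j) ?index_mem // nth_index.
rewrite -sum1_card.
apply: (leq_trans _ (Sv_ge (P := mem (hom_maps E EG)) (rho := rho) _ _ _)).
- apply: leq_sum => phi; rewrite /hom_maps inE => /andP [_ H].
  rewrite /fL /homL; case: forallP => //; case; move=> F; apply/implyP => FE.
  move/forallP: H => /(_ F); rewrite FE /=.
  by rewrite (eq_imset _ (nthr phi)).
- move=> phi phi' _ _ E1; apply/ffunP => i; by rewrite -(nthr phi) -(nthr phi') E1.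
- by move=> phi _; rewrite size_map /= sizeL.
Qed.

Hypothesis Hsub : ~ subgraph (blowup s E) EG.

Lemma final_nat : 2 * m <= n ->
  n * #|hom_maps E EG| ^ Pr (tt' s j) <=
  ((s j + sumn (tt' s j) + sumn (tt' s j) * sumn (tt' s j)) * 2 ^ (m * Pr (tt' s j)))
    * #|inj_maps m n| ^ Pr (tt' s j).
Proof.
move=> Hmn.
have n0 : 0 < n by case: (n) x0 => [[]|].
set t := tt' s j; set P := Pr t; set M := sumn t; set C0 := s j + M + M * M.
have A := thmA (1 :: t) (fL E EG j x0) (_ : 0 < #|'I_n|); rewrite card_ord in A.
have {}A := A n0.
have Es : size (1 :: t) = m by rewrite /= size_tt sizeL.
have Ep : Pr (1 :: t) = P by rewrite /Pr big_cons mul1n.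
have Em : sumn (1 :: t) = 1 + M by [].
rewrite Es Ep Em in A.
have B := T_bound j x0 Hsub.
have Hh := expn_mono P (hom_le).
have S1 : n ^ M * (n * #|hom_maps E EG| ^ P) <= n ^ M * (n ^ (m * P) * C0).
  rewrite mulnA -expnSr -addn1 addnC.
  apply: leq_trans (leq_mul (leqnn _) Hh) _.
  apply: leq_trans A _.
  by rewrite mulnCA leq_mul2l B orbT.
rewrite leq_pmul2l ?expn_gt0 ?n0 // in S1.
apply: leq_trans S1 _.
rewrite mulnC -mulnA leq_mul2l; apply/orP; right.
rewrite /inj_maps card_inj_ffuns !card_ord !expnM -expnMn.
by apply: expn_mono; apply: ffact_bound.
Qed.

End Fin.

From Stdlib Require Import Reals.
From Stdlib Require Import Lra.

Section RealPart.
Local Open Scope R_scope.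

Lemma INR_le_nat (a b : nat) : (a <= b)%nat -> INR a <= INR b.
Proof. by move/leP; apply: le_INR. Qed.

Lemma INR_pos (a : nat) : (0 < a)%nat -> 0 < INR a.
Proof. by move/ltP; apply: lt_0_INR. Qed.

Lemma expn_pow (a b : nat) : expn a b = Nat.pow a b.
Proof. elim: b => [//|b IH]; by rewrite expnS IH. Qed.

Lemma real_step (h D n C1 P : nat) : (0 < D)%nat -> (0 < n)%nat -> (0 < P)%nat -> (0 < C1)%nat ->
  (n * expn h P <= C1 * expn D P)%nat ->
  INR h / INR D <= Rpower (INR C1) (/ INR P) * Rpower (INR n) (- / INR P).
Proof.
move=> D0 n0 P0 C0 H.
have Dp := INR_pos D0; have np := INR_pos n0; have Pp := INR_pos P0; have Cp := INR_pos C0.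
have Rp : 0 < Rpower (INR C1) (/ INR P) * Rpower (INR n) (- / INR P).
  by apply: Rmult_lt_0_compat; rewrite /Rpower; apply: exp_pos.
case: (posnP h) => [-> | h0].
  by rewrite /= /Rdiv Rmult_0_l; lra.
have hp := INR_pos h0.
set r := INR h / INR D.
have rp : 0 < r by rewrite /r; apply: Rdiv_lt_0_compat.
have HR := INR_le_nat H; rewrite !mult_INR !expn_pow !pow_INR in HR.
have rP : r ^ P <= INR C1 / INR n.
  rewrite /r /Rdiv Rpow_mult_distr pow_inv.
  have DPp : 0 < INR D ^ P by apply: pow_lt.
  apply: (Rmult_le_reg_r (INR D ^ P * INR n)); first by apply: Rmult_lt_0_compat.
  replace (INR h ^ P * / INR D ^ P * (INR D ^ P * INR n)) with (INR n * INR h ^ P) by (field; lra).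
  replace (INR C1 * / INR n * (INR D ^ P * INR n)) with (INR C1 * INR D ^ P) by (field; lra).
  exact: HR.
have -> : r = Rpower (r ^ P) (/ INR P).
  rewrite -Rpower_pow // Rpower_mult Rinv_r ?Rpower_1 //; lra.
apply: Rle_trans (Rle_Rpower_l _ _ _ _ (conj (pow_lt _ _ rp) rP)) _.
  by apply: Rlt_le; apply: Rinv_0_lt_compat.
rewrite /Rdiv -Rpower_mult_distr //; last by apply: Rinv_0_lt_compat.
apply: Req_le; congr Rmult.
rewrite /Rpower ln_Rinv //; congr exp; ring.
Qed.

End RealPart.

Unset Implicit Arguments.

Theorem mainTheorem16 (m : nat) (E : {set {set 'I_m}}) (s : 'I_m -> nat) :
  (forall i, 0 < s i) ->
  exists C : R, (0 < C)%R /\ exists N : nat, forall n : nat, N <= n ->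
    forall EG : {set {set 'I_n}},
      same_ranks E EG ->
      ~ subgraph (blowup s E) EG ->
      (density E EG <= C * Rpower (INR n) (- delta s))%R.
Proof.
case: m E s => [|m'] E s spos.
  exists 1%R; split; first lra.
  exists 0 => n _ EG _ _.
  have -> : delta s = 0%R by rewrite /delta big_ord0 /= /Rdiv Rmult_0_l.
  rewrite Ropp_0 /Rpower Rmult_0_l exp_0 Rmult_1_l /density.
  have D1 : #|inj_maps 0 n| = 1 by rewrite /inj_maps card_inj_ffuns !card_ord ffactn0.
  rewrite D1 /= Rdiv_1_r.
  have : (#|hom_maps E EG| <= 1)%nat.
    rewrite -D1; apply: subset_leq_card; apply/subsetP => f; rewrite inE => /andP [].
    by [].
  by move/INR_le_nat.
set m := m'.+1.
set j := [arg max_(i > (ord0 : 'I_m)) s i].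
have Hj : forall i, s i <= s j.
  by rewrite /j; case: arg_maxnP => // i _ H k; apply: H.
set t := tt' s j; set P := Pr t; set M := sumn t.
set C1 := (s j + M + M * M) * expn 2 (m * P).
have EP : P = \prod_(i in [pred i : 'I_m | i != j]) s i.
  by rewrite /P /Pr /t /tt' big_map_id /L big_enum.
have P0 : 0 < P by rewrite EP prodn_gt0.
have C0 : 0 < C1 by rewrite /C1 muln_gt0 !addn_gt0 spos /= expn_gt0.
have Edelta : delta s = (/ INR P)%R.
  rewrite /delta.
  have -> : \max_(i < m) s i = s j.
    apply/eqP; rewrite eqn_leq leq_bigmax andbT.
    by apply/bigmax_leqP => i _.
  rewrite (bigD1 j) //= -EP mult_INR.
  have := INR_pos (spos j); have := INR_pos P0; move=> h1 h2.
  field; lra.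
exists (Rpower (INR C1) (/ INR P)); split; first by rewrite /Rpower; apply: exp_pos.
exists (2 * m) => n Hn EG _ Hsub.
have n0 : 0 < n by apply: leq_trans Hn; rewrite muln_gt0.
set x0 : 'I_n := Ordinal n0.
have Hnat := final_nat j x0 Hsub Hn.
rewrite Edelta /density.
apply: real_step => //.
by rewrite /inj_maps card_inj_ffuns !card_ord ffact_gt0 (leq_trans _ Hn) // leq_pmull.
Qed.
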